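(* Let $n\ge 2$ and let $\mathsf{M}$ be a square submatrix of order $m$ of a matrix in $\mathscr{D}_n$. Then one of the following holds: (i) $|\det\mathsf{M}|\in\{0,1\}$; (ii) there exist an integer $m'\in[m]$ and a matrix $\mathsf{M}'\in\mathscr{D}_{m'}$ such that $|\det\mathsf{M}|=|\det\mathsf{M}'|$.
   Context: Let $e_1,\dots,e_n$ be the standard basis of $\mathbb{R}^n$ and $[\pm n]=\{-n,\dots,-1,1,\dots,n\}$. For $i\in[n-1]$ and $r\in[\pm n]$ with $i<|r|$, set $d(i,r)=e_i+\mathrm{sgn}(r)\,e_{|r|}\in\mathbb{R}^n$. $\mathscr{D}_n$ denotes the set of $n\times n$ real matrices each of whose rows is of the form $d(i,r)$ for some such $i,r$ (rows may repeat). A square submatrix is obtained by deleting some rows and the same number of columns. *)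

(* Defs.v *)
From HB Require Import structures.
From mathcomp Require Import all_boot all_order all_algebra.
Set Implicit Arguments. Unset Strict Implicit. Unset Printing Implicit Defensive.
Import Order.TTheory GRing.Theory Num.Theory.
Local Open Scope ring_scope.

(* d(i,r) = e_i + sgn(r) e_|r| with i < |r|, written 0-based:
   indices i < j in 'I_n, sign (-1)^s. *)
Definition drow (R : numDomainType) (n : nat) (i j : 'I_n) (s : bool) : 'rV[R]_n :=
  \row_k ((k == i)%:R + (-1) ^+ s * (k == j)%:R).

Definition is_drow (R : numDomainType) (n : nat) (v : 'rV[R]_n) : Prop :=
  exists (i j : 'I_n) (s : bool), (i < j)%N /\ v = drow R i j s.

Definition inD (R : numDomainType) (n : nat) (A : 'M[R]_n) : Prop :=
  forall k : 'I_n, is_drow (row k A).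

(* square submatrix of order m: keep rows f and columns g (strictly increasing). *)
Definition strict_incr (m n : nat) (f : 'I_m -> 'I_n) : Prop :=
  forall x y : 'I_m, (x < y)%N -> (f x < f y)%N.

(* Main.v *)
Require Import Defs.
From HB Require Import structures.
From mathcomp Require Import all_boot all_order all_algebra.
From mathcomp Require Import zify.
Import Order.TTheory GRing.Theory Num.Theory.
Local Open Scope ring_scope.

Lemma lift_incr {k} (i : 'I_k.+1) : strict_incr (lift i).
Proof. move=> x y /= Hxy; rewrite /bump; case: leqP; case: leqP; lia. Qed.

Lemma comp_incr {a b c} {f : 'I_b -> 'I_c} {h : 'I_a -> 'I_b} :
  strict_incr f -> strict_incr h -> strict_incr (f \o h).
Proof. by move=> Hf Hh x y /Hh /Hf. Qed.

Lemma incr_inj {m n} {g : 'I_m -> 'I_n} : strict_incr g -> injective g.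
Proof.
move=> Hg x y Exy; apply/val_inj; case: (ltngtP x y) => // /Hg; by rewrite Exy ltnn.
Qed.

Lemma incr_lt {m n} {g : 'I_m -> 'I_n} {a b} : strict_incr g ->
  (g a < g b)%N -> (a < b)%N.
Proof.
move=> Hg H; case: (ltngtP a b) => // [/Hg|E]; first lia.
have E' : a = b by apply/val_inj.
by move: H; rewrite E' ltnn.
Qed.

Lemma entry {R : realFieldType} {n m} {A : 'M[R]_n} {f} (g : 'I_m -> 'I_n) {i : 'I_m} (c : 'I_m) {p q : 'I_n} {s : bool} :
  row (f i) A = drow R p q s ->
  mxsub f g A i c = (g c == p)%:R + (-1) ^+ s * (g c == q)%:R.
Proof.
move=> E; rewrite mxE.
have := congr1 (fun v : 'rV_n => v 0 (g c)) E; rewrite /drow !mxE => ->.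
by [].
Qed.

Lemma main_ind (R : realFieldType) (n : nat) (A : 'M[R]_n) m :
  forall (f g : 'I_m -> 'I_n),
  inD A -> strict_incr f -> strict_incr g ->
  let M := mxsub f g A in
  (`|\det M| = 0 \/ `|\det M| = 1) \/
  (exists m' : nat, (1 <= m' <= m)%N /\
     exists M' : 'M[R]_m', inD M' /\ `|\det M| = `|\det M'|).
Proof.
elim: m => [|k IH] f g HA Hf Hg M.
  by left; right; rewrite /M det_mx00 normr1.
case: (boolP [exists i, [forall c, M i c == 0]]) => [/existsP [i /forallP Hi]|Hz].
  left; left; rewrite (expand_det_row _ i) big1 ?normr0 // => j _.
  by rewrite (eqP (Hi j)) mul0r.
case: (boolP [exists i, [exists c, (M i c != 0) &&
     [forall c', (c' != c) ==> (M i c' == 0)]]]) => [/existsP [i /existsP [c /andP [Hc /forallP Hc']]]|Hs].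
  have Hdet : `|\det M| = `|\det (mxsub (f \o lift i) (g \o lift c) A)|.
    rewrite (expand_det_row _ i) (bigD1 c) //= big1 ?addr0; last first.
      by move=> j Hj; rewrite (eqP (implyP (Hc' j) Hj)) mul0r.
    have [p [q [s [Hpq Hr]]]] := HA (f i).
    have Habs : `|M i c| = 1.
      move: Hc; rewrite /M (entry g c Hr).
      case: (eqVneq (g c) p) => Ep; case: (eqVneq (g c) q) => Eq /=.
      - by move: Hpq; rewrite -Ep -Eq ltnn.
      - by rewrite mulr0 addr0 normr1.
      - by rewrite add0r mulr1 normrX normrN1 expr1n.
      - by rewrite mulr0 addr0 eqxx.
    rewrite /cofactor !normrM Habs mul1r normrX normrN1 expr1n mul1r.
    congr (`| \det _ |); apply/matrixP => x y; by rewrite !mxE.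
  have := IH (f \o lift i) (g \o lift c) HA (comp_incr Hf (lift_incr _))
     (comp_incr Hg (lift_incr _)) => /=; rewrite -Hdet.
  case=> [H|[m' [Hm' H]]]; [by left|right; exists m'; split=> //; lia].
right; exists k.+1; split; first lia.
exists M; split=> //.
move=> i; have [p [q [s [Hpq Hr]]]] := HA (f i).
have Hentry := fun c : 'I_k.+1 => entry g c Hr.
have Hnz : ~~ [forall c, M i c == 0] by apply: contra Hz => H; apply/existsP; exists i.
have Hns : forall c, M i c != 0 -> ~~ [forall c', (c' != c) ==> (M i c' == 0)].
  move=> c Hc; apply/negP => H; move/negP: Hs; apply; apply/existsP; exists i.
  by apply/existsP; exists c; rewrite Hc.
have [c0 Hc0] : exists c0, M i c0 != 0.
  by move/forallPn: Hnz => [c0 Hc0]; exists c0.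
have Hsingle : forall r, (forall c, M i c != 0 -> g c = r) -> False.
  move=> r Hr'; move/negP: (Hns c0 Hc0); apply; apply/forallP => c'.
  apply/implyP => Hne; apply/negPn/negP => Hc'.
  move/eqP: Hne; apply; apply: (incr_inj Hg); by rewrite (Hr' _ Hc') (Hr' _ Hc0).
have [a Ha] : exists a, g a = p.
  case: (boolP [exists a, g a == p]) => [/existsP [a /eqP]|Hn]; first by exists a.
  exfalso; apply: (Hsingle q) => c; rewrite Hentry.
  case: (eqVneq (g c) p) => [E|_]; first by move: Hn => /existsPn /(_ c); rewrite E eqxx.
  by case: (eqVneq (g c) q) => // _; rewrite mulr0 addr0 eqxx.
have [b Hb] : exists b, g b = q.
  case: (boolP [exists b, g b == q]) => [/existsP [b /eqP]|Hn]; first by exists b.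
  exfalso; apply: (Hsingle p) => c; rewrite Hentry.
  case: (eqVneq (g c) q) => [E|_]; first by move: Hn => /existsPn /(_ c); rewrite E eqxx.
  by rewrite mulr0 addr0; case: (eqVneq (g c) p) => // _; rewrite eqxx.
exists a, b, s; split.
  by apply: (incr_lt Hg); rewrite Ha Hb.
apply/matrixP => x c; rewrite [LHS]mxE Hentry /drow mxE -Ha -Hb.
by rewrite !(inj_eq (incr_inj Hg)).
Qed.

Theorem mainTheorem3 (R : realFieldType) (n m : nat) (A : 'M[R]_n)
    (f g : 'I_m -> 'I_n) :
  (2 <= n)%N -> inD A -> strict_incr f -> strict_incr g ->
  let M := mxsub f g A in
  (`|\det M| = 0 \/ `|\det M| = 1) \/
  (exists m' : nat, (1 <= m' <= m)%N /\
     exists M' : 'M[R]_m', inD M' /\ `|\det M| = `|\det M'|).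
Proof. by move=> _ HA Hf Hg; apply: main_ind. Qed.
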